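(* Given a derivation in Horn Linear Logic $\mathbf{HLL}$ of a Horn sequent $W,\Delta,!\Gamma\vdash Z$, one can construct a tree-like Horn program $P$ which is a strong solution to this sequent.
   Context: Positive literals are propositional variables; a simple product is a tensor product of one or more positive literals, $\otimes$ and $\oplus$ being commutative and associative, so simple products correspond to nonempty finite multisets of literals; $X\cong Y$ means they represent the same multiset. Horn implication: $X\multimap Y$; $\oplus$-Horn implication: $X\multimap(Y_1\oplus Y_2)$ ($X,Y,Y_i$ simple products). A Horn sequent is $W,\Delta,!\Gamma\vdash Z$ with $W,Z$ simple products and $\Delta,\Gamma$ finite multisets of Horn and $\oplus$-Horn implications. $\mathbf{HLL}$ has the rules: I: $X\vdash X$; L$\otimes$: from $X,\Gamma,!\Delta\vdash Z$ infer $Y,\Gamma,!\Delta\vdash Z$ if $X\cong Y$; H: $X,X\multimap Y\vdash Y$; M: from $X,\Gamma,!\Delta\vdash Y$ infer $(X\otimes V),\Gamma,!\Delta\vdash(Y\otimes V)$; $\oplus$-H: from $(Y_1\otimes V),\Gamma,!\Delta\vdash Z$ and $(Y_2\otimes V),\Gamma,!\Delta\vdash Z$ infer $(X\otimes V),\Gamma,X\multimap(Y_1\oplus Y_2),!\Delta\vdash Z$; L!: from $X,\Gamma,A,!\Delta\vdash Z$ infer $X,\Gamma,!A,!\Delta\vdash Z$; W!: from $X,\Gamma,!\Delta\vdash Z$ infer $X,\Gamma,!A,!\Delta\vdash Z$; C!: from $X,\Gamma,!A,!A,!\Delta\vdash Z$ infer $X,\Gamma,!A,!\Delta\vdash Z$;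 Cut: from $W,\Gamma_1,!\Delta_1\vdash U$ and $U,\Gamma_2,!\Delta_2\vdash Z$ infer $W,\Gamma_1,\Gamma_2,!\Delta_1,!\Delta_2\vdash Z$ ($A$ a Horn or $\oplus$-Horn implication). A tree-like Horn program is a finite rooted tree in which each vertex has at most two children, each edge is labelled by a Horn implication, the root is the input vertex, and each vertex with exactly two outgoing edges (a divergent vertex) has them labelled by Horn implications with the same antecedent, $X\multimap Y_1$ and $X\multimap Y_2$. For a simple product $W$, values $\mathrm{OUT}(P,W,v)$ are defined: $\mathrm{OUT}(P,W,\text{root})=W$; for an edge $(v,w)$ labelled $X\multimap Y$, if $\mathrm{OUT}(P,W,v)$ is defined and $\mathrm{OUT}(P,W,v)\cong X\otimes V$ for some (possibly empty) product $V$ of literals, then $\mathrm{OUT}(P,W,w)=Y\otimes V$; otherwise it is undefined. The formula used on an edge $e$ out of a non-divergent vertex is its label; on each of the two edges out of a divergent vertex labelled $X\multimap Y_1$, $X\multimap Y_2$ it is $X\multimap(Y_1\oplus Y_2)$. $P$ is a strong solution to $W,\Delta,!\Gamma\vdash Z$ if: for every terminal vertex $w$, $\mathrm{OUT}(P,W,w)$ is defined and $\cong Z$; the formula used on every edge belongs to $\Gamma$ or to $\Delta$; and on every path from the root to a terminal vertex, each formula of $\Delta$ (counted with multiplicity) is used exactly once. *)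

(* Defs.v *)
From HB Require Import structures.
From mathcomp Require Import all_boot.
From mathcomp Require Import finmap multiset.

Set Implicit Arguments.
Unset Strict Implicit.
Unset Printing Implicit Defensive.

Local Open Scope mset_scope.

Definition lit := nat.

(* Products of literals, identified up to commutativity/associativity of
   the tensor: finite multisets of literals.  A *simple* product is a
   nonempty one; tensor is multiset sum, the empty multiset is the empty
   product (only used for the "possibly empty" context V). *)
Definition lprod := {mset lit}.
Definition simple (X : lprod) : bool := X != mset0.

(* Horn implications X -o Y and (+)-Horn implications X -o (Y1 (+) Y2). *)
Inductive formula :=
| Horn of lprod & lprod
| OHorn of lprod & lprod & lprod.

Definition formula_enc (f : formula) : lprod * lprod * option lprod :=
  match f with
  | Horn X Y => (X, Y, None)
  | OHorn X Y1 Y2 => (X, Y1, Some Y2)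
  end.
Definition formula_dec (t : lprod * lprod * option lprod) : formula :=
  match t with
  | (X, Y, None) => Horn X Y
  | (X, Y1, Some Y2) => OHorn X Y1 Y2
  end.
Lemma formula_encK : cancel formula_enc formula_dec.
Proof. by case. Qed.
HB.instance Definition _ := Equality.copy formula (can_type formula_encK).

Definition wf_formula (A : formula) : bool :=
  match A with
  | Horn X Y => simple X && simple Y
  | OHorn X Y1 Y2 => [&& simple X, simple Y1 & simple Y2]
  end.

(* Derivability in HLL of the sequent  W, G, !D |- Z
   (G : linear context, D : the banged context, both multisets, represented
   as sequences up to permutation via the rule [hll_exch]). *)
Inductive hll : lprod -> seq formula -> seq formula -> lprod -> Prop :=
| hll_I X : simple X -> hll X [::] [::] X
| hll_H X Y : simple X -> simple Y -> hll X [:: Horn X Y] [::] Y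
| hll_M X G D Y V : hll X G D Y -> hll (X `+` V) G D (Y `+` V)
| hll_OH X Y1 Y2 V G D Z :
    simple X -> simple Y1 -> simple Y2 ->
    hll (Y1 `+` V) G D Z -> hll (Y2 `+` V) G D Z ->
    hll (X `+` V) (OHorn X Y1 Y2 :: G) D Z
| hll_Lbang X A G D Z : hll X (A :: G) D Z -> hll X G (A :: D) Z
| hll_Wbang X A G D Z : wf_formula A -> hll X G D Z -> hll X G (A :: D) Z
| hll_Cbang X A G D Z : hll X G (A :: A :: D) Z -> hll X G (A :: D) Z
| hll_Cut W G1 D1 U G2 D2 Z :
    hll W G1 D1 U -> hll U G2 D2 Z -> hll W (G1 ++ G2) (D1 ++ D2) Z
| hll_exch W G D Z G' D' :
    hll W G D Z -> perm_eq G G' -> perm_eq D D' -> hll W G' D' Z.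

(* Tree-like Horn programs.  [PNode1 X Y P]: a vertex with one outgoing edge
   labelled X -o Y leading to subtree P.  [PNode2 X Y1 Y2 P1 P2]: a divergent
   vertex whose two outgoing edges are labelled X -o Y1 and X -o Y2. *)
Inductive program :=
| PLeaf
| PNode1 of lprod & lprod & program
| PNode2 of lprod & lprod & lprod & program & program.

Fixpoint program_wf (P : program) : bool :=
  match P with
  | PLeaf => true
  | PNode1 X Y P1 => [&& simple X, simple Y & program_wf P1]
  | PNode2 X Y1 Y2 P1 P2 =>
      [&& simple X, simple Y1, simple Y2, program_wf P1 & program_wf P2]
  end.

(* [outs_ok P W Z]: starting from OUT(root) = W, OUT(P,W,w) is defined and
   equal to Z for every terminal vertex w. *)
Fixpoint outs_ok (P : program) (W Z : lprod) : Prop :=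
  match P with
  | PLeaf => W = Z
  | PNode1 X Y P1 => exists V, W = X `+` V /\ outs_ok P1 (Y `+` V) Z
  | PNode2 X Y1 Y2 P1 P2 =>
      exists V, W = X `+` V /\ outs_ok P1 (Y1 `+` V) Z /\ outs_ok P2 (Y2 `+` V) Z
  end.

Fixpoint used_paths (P : program) : seq (seq formula) :=
  match P with
  | PLeaf => [:: [::]]
  | PNode1 X Y P1 => map (cons (Horn X Y)) (used_paths P1)
  | PNode2 X Y1 Y2 P1 P2 =>
      map (cons (OHorn X Y1 Y2)) (used_paths P1 ++ used_paths P2)
  end.

Definition strong_solution (P : program) (W : lprod) (Dl Gb : seq formula)
    (Z : lprod) : Prop :=
  outs_ok P W Z /\
  (forall s, s \in used_paths P ->
     (forall A, A \in s -> (A \in Gb) || (A \in Dl)) /\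
     (* the formulas of Dl, with multiplicity, are each used exactly once on
        the path; any further uses are uses of formulas of Gb *)
     (forall A, count_mem A Dl <= count_mem A s /\
                (count_mem A Dl < count_mem A s -> A \in Gb))).

(* Main.v *)
Require Import Defs.
From mathcomp Require Import all_boot.
From mathcomp Require Import finmap multiset.

Local Open Scope mset_scope.

Fixpoint graft (P Q : program) : program :=
  match P with
  | PLeaf => Q
  | PNode1 X Y P1 => PNode1 X Y (graft P1 Q)
  | PNode2 X Y1 Y2 P1 P2 => PNode2 X Y1 Y2 (graft P1 Q) (graft P2 Q)
  end.

Lemma outs_graft P Q W U Z :
  outs_ok P W U -> outs_ok Q U Z -> outs_ok (graft P Q) W Z.
Proof.
elim: P W => [|X Y P1 IH|X Y1 Y2 P1 IH1 P2 IH2] W /=.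
- by move=> ->.
- by move=> [V [-> H]] HQ; exists V; split => //; apply: IH H HQ.
- move=> [V [-> [H1 H2]]] HQ; exists V; split => //; split.
  + exact: IH1 H1 HQ.
  + exact: IH2 H2 HQ.
Qed.

Lemma outs_M P W Z V : outs_ok P W Z -> outs_ok P (W `+` V) (Z `+` V).
Proof.
elim: P W => [|X Y P1 IH|X Y1 Y2 P1 IH1 P2 IH2] W /=.
- by move=> ->.
- move=> [V' [-> H]]; exists (V' `+` V); split; first by rewrite msetDA.
  by rewrite msetDA; apply: IH.
- move=> [V' [-> [H1 H2]]]; exists (V' `+` V); split; first by rewrite msetDA.
  by rewrite !msetDA; split; [apply: IH1|apply: IH2].
Qed.

Lemma wf_graft P Q : program_wf P -> program_wf Q -> program_wf (graft P Q).
Proof.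
elim: P => [|X Y P1 IH|X Y1 Y2 P1 IH1 P2 IH2] //=.
- by move=> /and3P [-> -> H] HQ /=; apply: IH.
- by move=> /and5P [-> -> -> H1 H2] HQ /=; rewrite IH1 // IH2.
Qed.

Lemma paths_graft P Q s : s \in used_paths (graft P Q) ->
  exists s1 s2, [/\ s1 \in used_paths P, s2 \in used_paths Q & s = s1 ++ s2].
Proof.
elim: P s => [|X Y P1 IH|X Y1 Y2 P1 IH1 P2 IH2] s /=.
- by move=> Hs; exists [::], s; rewrite mem_seq1.
- move=> /mapP [s' Hs' ->]; have [s1 [s2 [H1 H2 ->]]] := IH _ Hs'.
  exists (Horn X Y :: s1), s2; split => //; exact: map_f.
- rewrite map_cat mem_cat => /orP [] /mapP [s' Hs' ->].
  + have [s1 [s2 [H1 H2 ->]]] := IH1 _ Hs'.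
    exists (OHorn X Y1 Y2 :: s1), s2; split => //.
    by rewrite map_cat mem_cat map_f.
  + have [s1 [s2 [H1 H2 ->]]] := IH2 _ Hs'.
    exists (OHorn X Y1 Y2 :: s1), s2; split => //.
    by rewrite map_cat mem_cat; apply/orP; right; apply: map_f.
Qed.

Definition cond (s G D : seq formula) : Prop :=
  (forall A, A \in s -> (A \in D) || (A \in G)) /\
  (forall A, count_mem A G <= count_mem A s /\
             (count_mem A G < count_mem A s -> A \in D)).

Definition good P G D := forall s, s \in used_paths P -> cond s G D.

Lemma sol_good P W G D Z : strong_solution P W G D Z <-> outs_ok P W Z /\ good P G D.
Proof. by []. Qed.

Theorem theorem2 (W Z : lprod) (Dl Gb : seq formula) :
  hll W Dl Gb Z ->
  exists P : program, program_wf P /\ strong_solution P W Dl Gb Z.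
Proof.
elim => {W Z Dl Gb}.
- move=> X sX; exists PLeaf; split => //; split => //= s.
  by rewrite mem_seq1 => /eqP ->; split.
- move=> X Y sX sY; exists (PNode1 X Y PLeaf); split; first by rewrite /= sX sY.
  split; first by exists mset0; rewrite !msetD0.
  move=> s; rewrite /= mem_seq1 => /eqP ->; split.
  + by move=> A HA.
  + by move=> A /=; rewrite ltnn.
- move=> X G D Y V _ [P [wP [oP gP]]]; exists P; split => //; split => //.
  exact: outs_M.
- move=> X Y1 Y2 V G D Z sX sY1 sY2 _ [P1 [w1 [o1 g1]]] _ [P2 [w2 [o2 g2]]].
  exists (PNode2 X Y1 Y2 P1 P2); split; first by rewrite /= sX sY1 sY2 w1 w2.
  split; first by exists V.
  move=> s; rewrite /= map_cat mem_cat => Hs.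
  have [s' Hs' ->] : exists2 s', (s' \in used_paths P1) || (s' \in used_paths P2)
      & s = OHorn X Y1 Y2 :: s'.
    by case/orP: Hs => /mapP [s' Hs' ->]; exists s' => //; rewrite Hs' ?orbT.
  have [m c] : cond s' G D by case/orP: Hs' => H; [apply: g1|apply: g2].
  split.
  + move=> A; rewrite in_cons => /orP [/eqP ->|/m]; first by rewrite in_cons eqxx orbT.
    by case/orP => H; rewrite in_cons H ?orbT.
  + move=> A /=; have [c1 c2] := c A; split; first by rewrite leq_add2l.
    by rewrite ltn_add2l.
- move=> X A G D Z _ [P [wP [oP gP]]]; exists P; split => //; split => //.
  move=> s Hs; have [m c] := gP s Hs; split.
  + move=> B /m; rewrite !in_cons.
    by case/orP => [->|/orP [->|->]]; rewrite ?orbT.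
  + move=> B; have [c1 c2] := c B; split.
      by apply: leq_trans c1; rewrite /= leq_addl.
    move=> h; rewrite in_cons; case: (B =P A) => [->|nBA]; first by [].
    apply: c2; have E : (A == B) = false by apply/eqP => E; apply: nBA.
    by rewrite /= E add0n.
- move=> X A G D Z _ _ [P [wP [oP gP]]]; exists P; split => //; split => //.
  move=> s Hs; have [m c] := gP s Hs; split.
  + by move=> B /m; rewrite in_cons; case/orP => ->; rewrite ?orbT.
  + by move=> B; have [c1 c2] := c B; split => // /c2 H; rewrite in_cons H orbT.
- move=> X A G D Z _ [P [wP [oP gP]]]; exists P; split => //; split => //.
  move=> s Hs; have [m c] := gP s Hs; split.
  + by move=> B /m; rewrite !in_cons orbA orbb.
  + by move=> B; have [c1 c2] := c B; split => // /c2; rewrite !in_cons orbA orbb.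
- move=> W G1 D1 U G2 D2 Z _ [P1 [w1 [o1 g1]]] _ [P2 [w2 [o2 g2]]].
  exists (graft P1 P2); split; first exact: wf_graft.
  split; first exact: outs_graft o1 o2.
  move=> s /paths_graft [s1 [s2 [H1 H2 ->]]].
  have [m1 c1] := g1 _ H1; have [m2 c2] := g2 _ H2; split.
  + move=> A; rewrite !mem_cat => /orP [/m1|/m2] /orP [] ->; rewrite ?orbT //.
  + move=> A; rewrite !count_cat; have [a1 b1] := c1 A; have [a2 b2] := c2 A.
    split; first exact: leq_add.
    move=> Hlt; rewrite mem_cat.
    case: (ltnP (count_mem A G1) (count_mem A s1)) => [/b1 -> //|h1].
    have : count_mem A G2 < count_mem A s2.
      rewrite -(ltn_add2l (count_mem A s1)); apply: leq_ltn_trans Hlt.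
      by rewrite leq_add2r.
    by move/b2 => ->; rewrite orbT.
- move=> W G D Z G' D' _ [P [wP [oP gP]]] pG pD; exists P; split => //; split => //.
  move=> s Hs; have [m c] := gP s Hs; split.
  + by move=> A /m; rewrite (perm_mem pG) (perm_mem pD).
  + by move=> A; rewrite -(perm_mem pD) -(permP pG).
Qed.
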